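(* Let $\mathfrak a=\{(a_1,\dots,a_{n+1})\in\mathbb R^{n+1}:a_1+\dots+a_{n+1}=0\}$ be the maximal abelian subspace of $\mathfrak p$ for $\mathrm{SL}_{n+1}\mathbb R$ (diagonal trace-zero matrices), with positive roots $\Lambda^+=\{a_j^*-a_l^*: j<l\}$. Let $\{v_1,\dots,v_n\}$ be any basis of $\mathfrak a$, and let $A$ be the $n\times|\Lambda^+|$ matrix with rows indexed by $i$ and columns by $\alpha\in\Lambda^+$, whose $(i,\alpha)$ entry is $1$ if $\alpha(v_i)\ne0$ and $0$ otherwise. Then each row of $A$ has at most one entry equal to $1$ in a column whose other entries are all $0$; that is, for each $i$ there is at most one $\alpha\in\Lambda^+$ with $\alpha(v_i)\ne0$ and $\alpha(v_k)=0$ for all $k\ne i$. *)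

(* Defs.v *)
From HB Require Import structures.
From mathcomp Require Import all_boot all_order all_algebra.
From mathcomp Require Import reals.
Set Implicit Arguments. Unset Strict Implicit. Unset Printing Implicit Defensive.
Import Order.TTheory GRing.Theory Num.Theory.
Local Open Scope ring_scope.

(* Elements of R^(n+1) are row vectors 'rV[R]_(n.+1); coordinates a_1..a_(n+1)
   are indexed by j : 'I_(n.+1). *)

Definition in_a (R : realType) (n : nat) (x : 'rV[R]_(n.+1)) : Prop :=
  \sum_(j < n.+1) x 0 j = 0.

Definition basis_of_a (R : realType) (n : nat) (V : 'M[R]_(n, n.+1)) : Prop :=
  [/\ forall i : 'I_n, in_a (row i V),
      row_free V &
      forall x : 'rV[R]_(n.+1), in_a x -> (x <= V)%MS].

(* Positive roots of sl_(n+1): alpha_(j,l) = a_j^* - a_l^* with j < l. *)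
Definition pos_root (n : nat) (p : 'I_(n.+1) * 'I_(n.+1)) : bool :=
  (p.1 < p.2)%N.

Definition root_eval (R : realType) (n : nat) (p : 'I_(n.+1) * 'I_(n.+1))
  (x : 'rV[R]_(n.+1)) : R := x 0 p.1 - x 0 p.2.

Definition Aentry (R : realType) (n : nat) (V : 'M[R]_(n, n.+1)) (i : 'I_n)
  (p : 'I_(n.+1) * 'I_(n.+1)) : bool := root_eval p (row i V) != 0.

(* Main.v *)
Require Import Defs.
From HB Require Import structures.
From mathcomp Require Import all_boot all_order all_algebra.
From mathcomp Require Import reals.
Import Order.TTheory GRing.Theory Num.Theory.
Local Open Scope ring_scope.

Lemma root_eval_mul (R : realType) (n : nat) (V : 'M[R]_(n, n.+1)) c p :
  root_eval p (c *m V) = \sum_k c 0 k * root_eval p (row k V).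
Proof.
rewrite /root_eval !mxE -sumrB; apply: eq_bigr => k _; by rewrite !mxE mulrBr.
Qed.

Lemma root_eval_single (R : realType) (n : nat) (V : 'M[R]_(n, n.+1)) c p i :
  (forall k : 'I_n, k != i -> ~~ Aentry V k p) ->
  root_eval p (c *m V) = c 0 i * root_eval p (row i V).
Proof.
move=> H; rewrite root_eval_mul (bigD1 i) //= big1 ?addr0 // => k /H.
by rewrite /Aentry negbK => /eqP ->; rewrite mulr0.
Qed.

Lemma key (R : realType) (n : nat) (V : 'M[R]_(n, n.+1)) i
  (p q : 'I_(n.+1) * 'I_(n.+1)) (m : 'I_(n.+1)) :
  basis_of_a V ->
  Aentry V i p -> (forall k : 'I_n, k != i -> ~~ Aentry V k p) ->
  Aentry V i q -> (forall k : 'I_n, k != i -> ~~ Aentry V k q) ->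
  (m == q.1) || (m == q.2) -> m != p.1 -> m != p.2 -> q.1 != q.2 -> False.
Proof.
move=> [_ _ Hsp] Aip Hp Aiq Hq Hmq Hm1 Hm2 Hq12.
pose x : 'rV[R]_(n.+1) := \row_j ((j == m)%:R * (n.+1)%:R - 1).
have xa : in_a x.
  rewrite /in_a; under eq_bigr do rewrite mxE.
  rewrite sumrB sumr_const card_ord -mulr_suml (bigD1 m) //= eqxx big1 ?addr0.
    by rewrite mul1r subrr.
  by move=> j /negbTE ->.
have /submxP [c Hc] := Hsp x xa.
have Ep := @root_eval_single _ _ V c p i Hp.
have Eq := @root_eval_single _ _ V c q i Hq.
rewrite -Hc in Ep Eq.
have : root_eval p x = 0.
  rewrite /root_eval !mxE eq_sym (negbTE Hm1) eq_sym (negbTE Hm2); by rewrite subrr.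
rewrite Ep => /eqP; rewrite mulf_eq0 (negbTE Aip) orbF => /eqP c0.
move: Eq; rewrite c0 mul0r /root_eval !mxE.
have hn : (n.+1)%:R != 0 :> R by rewrite pnatr_eq0.
case/orP: Hmq => /eqP ->.
  rewrite eqxx eq_sym (negbTE Hq12) mul1r mul0r => /eqP.
  by rewrite sub0r opprK subrK (negbTE hn).
rewrite eqxx (negbTE Hq12) mul1r mul0r => /eqP.
  by rewrite sub0r -opprD addrC subrK oppr_eq0 (negbTE hn).
Qed.

Theorem lemma11p3 (R : realType) (n : nat) (V : 'M[R]_(n, n.+1)) :
  basis_of_a V ->
  forall (i : 'I_n) (p q : 'I_(n.+1) * 'I_(n.+1)),
    pos_root p -> Aentry V i p -> (forall k : 'I_n, k != i -> ~~ Aentry V k p) ->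
    pos_root q -> Aentry V i q -> (forall k : 'I_n, k != i -> ~~ Aentry V k q) ->
    p = q.
Proof.
move=> HV i [a b] [c d]; rewrite /pos_root /= => ab Ap Hp cd Aq Hq.
have qne : c != d by rewrite neq_ltn cd.
have pne : a != b by rewrite neq_ltn ab.
have [ca|] := boolP ((c != a) && (c != b)).
  case/andP: ca => h1 h2.
  by case: (@key _ _ V i (a,b) (c,d) c HV Ap Hp Aq Hq) => //=; rewrite eqxx.
have [da|] := boolP ((d != a) && (d != b)).
  case/andP: da => h1 h2.
  by case: (@key _ _ V i (a,b) (c,d) d HV Ap Hp Aq Hq) => //=; rewrite eqxx orbT.
rewrite !negb_and !negbK => /orP Hd /orP Hc.
case: Hc => /eqP Hc; case: Hd => /eqP Hd; subst => //.
all: try by rewrite eqxx in qne pne.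
all: by move: (ltn_trans ab cd); rewrite ltnn.
Qed.
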